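(* Let $b$ be the linear endomorphism of $\mathbf{WQSym}$ defined by $b(\mathbf M_u)=\mathbf M_{1\cdot u[1]}$, where $\cdot$ is concatenation and $u[1]$ is $u$ with every letter increased by $1$. For a plane forest $\overline{\mathcal F}$, let $B_+(\overline{\mathcal F})$ be the plane tree obtained by attaching the trees of $\overline{\mathcal F}$, in order, as children of a new common root. Then for every plane forest $\overline{\mathcal F}$, $$\pi\big(S'^{\iota(B_+(\overline{\mathcal F}))}\big)=b\big(\pi(S'^{\iota(\overline{\mathcal F})})\big).$$
   Context: A plane forest is a finite sequence of plane trees (rooted trees whose children are linearly ordered). For a plane forest with $n$ vertices, $\iota$ gives the rooted forest on vertex set $[n]$ obtained by numbering the vertices in order of first visit in a left depth-first traversal (trees from left to right). For a rooted forest $\mathcal F$ on $[n]$, over $A'=\{a_{ij}:1\le i\le j\}$ with $a_{hi}\prec a_{ij}$ for $h\le i<j$, $S'^{\mathcal F}$ is the sum of all words $w_1\cdots w_n$ with $w_k$ a diagonal letter $a_{ii}$ for each root $k$ and $w_k\prec w_l$ whenever $k$ is the parent of $l$. $\pi$ is the algebra morphism $a_{ij}\mapsto x_j$ into noncommutative series over $X=\{x_1<x_2<\cdots\}$ (identify $x_i$ with $i$). A packed word is a word over positive integers whose letter set is $\{1,\dots,m\}$; $\mathrm{pack}(w)$ replaces the $r$-th smallest letter by $r$; $\mathbf M_u=\sum_{\mathrm{pack}(w)=u}w$; $\mathbf{WQSym}$ is the span of the $\mathbf M_u$. *)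

(* Defs.v *)
From mathcomp Require Import all_boot.
Set Implicit Arguments. Unset Strict Implicit. Unset Printing Implicit Defensive.

Inductive ptree : Type := Node of seq ptree.
Definition pforest := seq ptree.

Definition Bplus (F : pforest) : ptree := Node F.

(* ---------- Rooted forests on [n] ----------
   A rooted forest on [n] = {1,...,n} is encoded by its parent list
   p : seq (option nat) of size n: the entry of index k-1 is the parent of
   vertex k (Some j, with j in [n]), or None if k is a root. *)
Definition rforest := seq (option nat).

(* iota: number the vertices in order of first visit of a left depth-first
   traversal.  [itree t par nx] numbers the root of t by nx (its parent being
   par) and the rest of t by nx+1, nx+2, ...; it returns the parent list of
   the vertices nx, nx+1, ... of t. *)
Fixpoint itree (t : ptree) (par : option nat) (nx : nat) {struct t}
  : seq (option nat) :=
  match t with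
  | Node ts =>
      par :: (fix iforest (ts : seq ptree) (m : nat) : seq (option nat) :=
                match ts with
                | [::] => [::]
                | t' :: ts' =>
                    let l := itree t' (Some nx) m in l ++ iforest ts' (m + size l)
                end) ts nx.+1
  end.

Fixpoint iforest_from (F : pforest) (m : nat) : seq (option nat) :=
  match F with
  | [::] => [::]
  | t :: F' => let l := itree t None m in l ++ iforest_from F' (m + size l)
  end.

Definition iota_pf (F : pforest) : rforest := iforest_from F 1.

(* ---------- Series ----------
   Letters a_ij of A' are pairs (i, j); a_ij belongs to A' iff 1 <= i <= j.
   Letters x_i of X are identified with positive integers i. *)
Definition letterA := (nat * nat)%type.
Definition inA' (a : letterA) : bool := (0 < a.1) && (a.1 <= a.2).
Definition seriesA := seq letterA -> nat.
Definition seriesX := seq nat -> nat.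

Definition precA (a b : letterA) : bool :=
  [&& a.1 <= a.2, a.2 == b.1 & b.1 < b.2].

Definition diagA (a : letterA) : bool := a.1 == a.2.

Definition Sprime (p : rforest) : seriesA := fun w =>
  nat_of_bool
    [&& size w == size p, all inA' w &
        all (fun k => match nth None p k with
                      | None => diagA (nth (0, 0) w k)
                      | Some q => precA (nth (0, 0) w q.-1) (nth (0, 0) w k)
                      end) (iota 0 (size p))].

(* pi : a_ij |-> x_j, extended to series: the coefficient of a word v over X
   in pi(S) is the (finite) sum of the coefficients in S of the words over A'
   mapped to v.  [preim v] enumerates those words. *)
Fixpoint preim (v : seq nat) : seq (seq letterA) :=
  match v with
  | [::] => [:: [::]]
  | j :: v' => [seq (i, j) :: w | i <- iota 1 j, w <- preim v']
  end.

Definition piS (S : seriesA) : seriesX := fun v => \sum_(w <- preim v) S w.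

Definition packed (u : seq nat) : bool :=
  sort leq (undup u) == iota 1 (size (undup u)).

Definition pack (w : seq nat) : seq nat :=
  [seq (index x (sort leq (undup w))).+1 | x <- w].

Definition M (u : seq nat) : seriesX := fun w =>
  nat_of_bool ((0 \notin w) && (pack w == u)).

Definition lin_comb (s : seq (seq nat * nat)) : seriesX := fun w =>
  \sum_(x <- s) x.2 * M x.1 w.

Definition in_WQSym (f : seriesX) : Prop :=
  exists s : seq (seq nat * nat), all packed (unzip1 s) /\ f =1 lin_comb s.

(* b(M_u) = M_{1 . u[1]}, extended linearly: image of a combination *)
Definition b_comb (s : seq (seq nat * nat)) : seq (seq nat * nat) :=
  [seq (1 :: map succn x.1, x.2) | x <- s].

(* Main.v *)
Require Import Defs.
From mathcomp Require Import all_boot.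
Set Implicit Arguments. Unset Strict Implicit. Unset Printing Implicit Defensive.

Fixpoint allPt (P : ptree -> Prop) (ts : seq ptree) : Prop :=
  if ts is t :: ts' then P t /\ allPt P ts' else True.

Definition ptree_ind2 (P : ptree -> Prop)
  (H : forall ts, allPt P ts -> P (Node ts)) : forall t, P t :=
  fix f t := match t with
  | Node ts => H ts ((fix g ts : allPt P ts := match ts with
                      | [::] => I | t :: ts' => conj (f t) (g ts') end) ts)
  end.

Fixpoint ifo (nx : nat) (ts : seq ptree) (m : nat) : seq (option nat) :=
  match ts with
  | [::] => [::]
  | t' :: ts' => let l := itree t' (Some nx) m in l ++ ifo nx ts' (m + size l)
  end.

Lemma itreeE ts par nx : itree (Node ts) par nx = par :: ifo nx ts nx.+1.
Proof.
rewrite /=; congr (_ :: _); move: nx.+1; elim: ts => //= t ts IH m.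
by rewrite IH.
Qed.

Definition sh (o : option nat) : option nat :=
  if o is Some q then Some (q.-1).+2 else Some 1.

Lemma itree_sh t : forall par nx, 0 < nx ->
  itree t (sh par) nx.+1 = map sh (itree t par nx).
Proof.
elim/ptree_ind2: t => ts Hts par nx nx0.
rewrite !itreeE /=; congr (_ :: _).
have: forall m, nx < m -> ifo nx.+1 ts m.+1 = map sh (ifo nx ts m).
  elim: ts Hts => //= t ts IH [Ht Hts] m Hm.
  have -> : Some nx.+1 = sh (Some nx) by rewrite /sh prednK.
  rewrite Ht ?(leq_trans _ Hm) // size_map map_cat addSn IH //.
  by rewrite (leq_trans Hm) ?leq_addr.
by apply.
Qed.

Lemma iota_Bplus F : iota_pf [:: Bplus F] = None :: map sh (iota_pf F).
Proof.
rewrite /iota_pf /= cats0; congr (_ :: _).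
suff: forall m, 0 < m -> (fix iforest (ts : seq ptree) (m : nat) : seq (option nat) :=
                match ts with
                | [::] => [::]
                | t' :: ts' =>
                    let l := itree t' (Some 1) m in l ++ iforest ts' (m + size l)
                end) F m.+1 = map sh (iforest_from F m) by apply.
elim: F => //= t F IH m m0.
by rewrite (itree_sh t None m0) map_cat size_map addSn IH // (leq_trans m0) ?leq_addr.
Qed.


Definition E (p : rforest) (v : seq nat) k : bool :=
  match nth None p k with
  | None => 0 < nth 0 v k
  | Some q => (0 < nth 0 v q.-1) && (nth 0 v q.-1 < nth 0 v k) end.
Definition good p v := (size v == size p) && all (E p v) (iota 0 (size v)).
Definition D (p : rforest) (v : seq nat) k i : bool :=
  match nth None p k with
  | None => i == nth 0 v k
  | Some q => (nth 0 v q.-1 == i) && (i < nth 0 v k) end.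

Lemma mem_preim v w : w \in Defs.preim v -> unzip2 w = v /\ all inA' w.
Proof.
elim: v w => [|j v IH] w /=; first by rewrite inE => /eqP ->.
case/allpairsP => [[i w'] [/= Hi Hw' ->]] /=.
have [-> ->] := IH _ Hw'; split=> //; rewrite andbT /inA' /=.
by move: Hi; rewrite mem_iota add1n ltnS.
Qed.

Lemma nth2 (w : seq letterA) j : (nth (0,0) w j).2 = nth 0 (unzip2 w) j.
Proof. by elim: w j => [|a w IH] [|j] //=. Qed.
Lemma nth12 (w : seq letterA) j : all inA' w -> (nth (0,0) w j).1 <= (nth (0,0) w j).2.
Proof.
elim: w j => [|a w IH] [|j] //= /andP[Ha Hw]; last exact: IH.
by case/andP: Ha.
Qed.

Lemma nat_all (T : Type) (P : pred T) s : nat_of_bool (all P s) = \prod_(k <- s) nat_of_bool (P k).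
Proof. by elim: s => [|a s IH]; rewrite ?big_nil ?big_cons //= -IH; case: (P a); case: all. Qed.

Lemma sum_preim (g : nat -> nat -> nat) v :
  \sum_(w <- Defs.preim v) \prod_(k <- iota 0 (size v)) g k (nth (0,0) w k).1 =
  \prod_(k <- iota 0 (size v)) \sum_(i <- iota 1 (nth 0 v k)) g k i.
Proof.
elim: v g => [|j v IH] g /=; first by rewrite !big_cons !big_nil.
rewrite big_allpairs_dep /= big_cons.
have E1 : iota 1 (size v) = map succn (iota 0 (size v)) by rewrite -(iotaDl 1).
rewrite E1 big_map /= big_distrl /=; apply: eq_bigr => i _.
rewrite -(IH (fun k => g k.+1)) big_distrr /=; apply: eq_bigr => w _.
by rewrite big_cons big_map.
Qed.

Lemma sum_eq_and (s : seq nat) c (P : pred nat) : uniq s ->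
  \sum_(i <- s) ((c == i) && P i) = (c \in s) && P c.
Proof.
elim: s => [|a s IH]; first by rewrite big_nil.
rewrite big_cons /= inE => /andP[Ha Hs]; rewrite IH //.
case: (eqVneq c a) => [->|] /=; last by []. by rewrite (negbTE Ha) andFb addn0; case: (P a).
Qed.

Lemma Sprime_preim p v w : w \in Defs.preim v ->
  Sprime p w = (size v == size p) * \prod_(k <- iota 0 (size v)) D p v k (nth (0,0) w k).1.
Proof.
case/mem_preim => Hv HA.
have Hs : size w = size v by rewrite -Hv size_map.
rewrite /Sprime Hs HA /=; case: eqP => Hsz /=; last by rewrite mul0n.
rewrite mul1n Hsz nat_all; apply: eq_big_seq => k; rewrite mem_iota /= => Hk.
rewrite /D; case: (nth None p k) => [q|].
  rewrite /precA nth12 //= !nth2 Hv.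
  by case: eqP => //= <-.
by rewrite /diagA nth2 Hv.
Qed.

Lemma piS_Sprime p v : piS (Sprime p) v = good p v.
Proof.
rewrite /piS (eq_big_seq _ (@Sprime_preim p v)) -big_distrr /= (sum_preim (fun k i => nat_of_bool (D p v k i))).
rewrite /good; case: eqP => _ /=; last by rewrite mul0n.
rewrite mul1n nat_all; apply: eq_bigr => k _.
rewrite /D /E; case: (nth None p k) => [q|].
  rewrite sum_eq_and ?iota_uniq // mem_iota add1n ltnS.
  case: (0 < nth 0 v q.-1) => //=; case H: (_ < nth 0 v k); last by rewrite andbF.
  by rewrite ltnW.
rewrite (eq_bigr (fun i => nat_of_bool ((nth 0 v k == i) && true))); last first.
  by move=> i _; rewrite andbT eq_sym.
by rewrite sum_eq_and ?iota_uniq // mem_iota andbT add1n ltnSn andbT.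
Qed.


Lemma good_nil p : good (None :: map sh p) [::] = false.
Proof. by []. Qed.

Lemma good_sh p x v :
  good (None :: map sh p) (x :: v) = [&& good p v, 0 < x & all (fun y => x < y) v].
Proof.
rewrite /good /= eqSS size_map.
have E1 : iota 1 (size v) = map succn (iota 0 (size v)) by rewrite -(iotaDl 1).
rewrite E1 all_map.
case: eqP => Hs //=.
rewrite {1}/E /=.
set E' := fun k => match nth None p k with
                   | None => (0 < x) && (x < nth 0 v k) | Some _ => E p v k end.
have -> : all (preim succn (E (None :: [seq sh i | i <- p]) (x :: v))) (iota 0 (size v))
          = all E' (iota 0 (size v)).
  apply: eq_in_all => k; rewrite mem_iota /= => Hk.
  rewrite /E' /E /= (nth_map None) -?Hs //.
  by case: (nth None p k).
case: (ltnP 0 x) => Hx /=; last by rewrite andbF.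
apply/idP/idP.
  move/allP => H.
  have Hall : forall N k, k < size v -> nth 0 v k <= N -> x < nth 0 v k.
    elim=> [|N IH] k Hk HN.
      have := H k; rewrite mem_iota Hk /E' /E => /(_ isT).
      case: (nth None p k) => [q /andP[Hq Hqk] | /andP[_ //]].
      by have := leq_trans Hqk HN.
    have := H k; rewrite mem_iota Hk /E' /E => /(_ isT).
    case: (nth None p k) => [q /andP[Hq Hqk] | /andP[_ //]].
    have Hq1 : q.-1 < size v.
      by rewrite ltnNge; apply: contraL Hq => Hq'; rewrite nth_default.
    have HqN : nth 0 v q.-1 <= N by rewrite -ltnS (leq_trans Hqk).
    exact: (ltn_trans (IH _ Hq1 HqN) Hqk).
  apply/andP; split.
    apply/allP => k Hk; have := H k Hk; rewrite /E' /E.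
    move: Hk; rewrite mem_iota /= => Hk.
    case: (nth None p k) => [q|] //= /andP[_ Hxk].
    exact: leq_ltn_trans Hxk.
  by apply/(all_nthP 0) => k Hk; apply: (Hall _ k Hk (leqnn _)).
case/andP => /allP HE /(all_nthP 0) HX.
apply/allP => k; rewrite mem_iota /= => Hk.
rewrite /E'; case e: (nth None p k) => [q|]; last by rewrite Hx HX.
by have := HE k; rewrite mem_iota Hk; apply.
Qed.


Definition SS (w : seq nat) := sort leq (undup w).

Lemma SS_sorted w : sorted ltn (SS w).
Proof.
by rewrite ltn_sorted_uniq_leq sort_uniq undup_uniq sort_sorted //; exact: leq_total.
Qed.

Lemma mem_SS w x : (x \in SS w) = (x \in w).
Proof. by rewrite mem_sort mem_undup. Qed.

Lemma idx_lt w a b : a \in w -> b \in w ->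
  (index a (SS w) < index b (SS w)) = (a < b).
Proof.
rewrite -(mem_SS w a) -(mem_SS w b) => Ha Hb; apply/idP/idP.
  exact: (sorted_ltn_index ltn_trans (SS_sorted w)).
move=> Hab; rewrite ltnNge leq_eqVlt; apply/negP => /orP[/eqP E|].
  have : nth 0 (SS w) (index a (SS w)) = nth 0 (SS w) (index b (SS w)) by rewrite E.
  by rewrite !nth_index // => E'; rewrite E' ltnn in Hab.
move/(sorted_ltn_index ltn_trans (SS_sorted w) b a Hb Ha) => Hba.
by have := ltn_trans Hab Hba; rewrite ltnn.
Qed.

Lemma idx_le w a b : a \in w -> b \in w ->
  (index a (SS w) <= index b (SS w)) = (a <= b).
Proof. by move=> Ha Hb; rewrite leqNgt [RHS]leqNgt idx_lt. Qed.

Lemma packE w : pack w = [seq (index x (SS w)).+1 | x <- w].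
Proof. by []. Qed.

Lemma packed_bound u : packed u -> all (fun x => 0 < x <= size u) u.
Proof.
rewrite /packed => /eqP H; apply/allP => x Hx.
have : x \in sort leq (undup u) by rewrite mem_sort mem_undup.
rewrite H mem_iota add1n ltnS => /andP[-> Hk] /=.
exact: leq_trans Hk (size_undup u).
Qed.

Lemma packed_pack w : packed (pack w).
Proof.
rewrite /packed.
set k := size (SS w).
have Hm : undup (pack w) =i iota 1 k.
  move=> y; rewrite mem_undup mem_iota add1n ltnS packE.
  apply/mapP/idP.
    by move=> [z Hz ->] /=; rewrite index_mem mem_SS.
  case: y => // j /= Hj; exists (nth 0 (SS w) j).
    by rewrite -mem_SS mem_nth.
  by rewrite index_uniq // sort_uniq undup_uniq.
have Heq : sort leq (undup (pack w)) = iota 1 k.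
  apply: (irr_sorted_eq ltn_trans ltnn).
  - by rewrite ltn_sorted_uniq_leq sort_uniq undup_uniq sort_sorted //; exact: leq_total.
  - exact: iota_ltn_sorted.
  by move=> y; rewrite mem_sort Hm.
have Hs : size (undup (pack w)) = k by rewrite -(size_sort leq) Heq size_iota.
by rewrite Heq Hs.
Qed.

Lemma pack_cons x v : all (fun y => x < y) v -> pack (x :: v) = 1 :: map succn (pack v).
Proof.
move=> Hall.
have Hxv : x \notin v by apply/negP => /(allP Hall); rewrite ltnn.
have HS : SS (x :: v) = x :: SS v.
  apply: (irr_sorted_eq ltn_trans ltnn); first exact: SS_sorted.
    rewrite /= path_sortedE ?SS_sorted ?andbT; last exact: ltn_trans.
    by apply/allP => y; rewrite mem_SS => /(allP Hall).
  by move=> y; rewrite mem_SS !inE mem_SS.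
rewrite !packE HS /= eqxx /=; congr (_ :: _).
rewrite -map_comp; apply/eq_in_map => y Hy /=.
by case: eqP => // E; rewrite E Hy in Hxv.
Qed.

Lemma M_b u x v : 0 \notin u ->
  M (1 :: map succn u) (x :: v) = ((0 < x) && all (fun y => x < y) v) * M u v.
Proof.
move=> Hu; rewrite /M.
case Hall: (all _ v); last first.
  rewrite andbF mul0n; suff /negbTE -> : pack (x :: v) != 1 :: map succn u by rewrite andbF.
  apply/eqP => Hp.
  have /allPn [y Hy Hyx] : ~~ all (fun y => x < y) v by rewrite Hall.
  rewrite -leqNgt in Hyx.
  have Hx0 : index x (SS (x :: v)) = 0 by move: Hp; rewrite packE /= => -[].
  have Hy0 : index y (SS (x :: v)) = 0.
    by apply/eqP; rewrite -leqn0 -Hx0 idx_le // inE ?Hy ?orbT ?eqxx.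
  have : 1 \in map succn u.
    move: Hp; rewrite packE /= => -[_ <-]; apply/mapP; exists y => //; by rewrite Hy0.
  by case/mapP => z Hz [Ez]; rewrite Ez Hz in Hu.
rewrite pack_cons // andbT inE negb_or eqseq_cons eqxx /= (inj_eq (inj_map succn_inj)) (eq_sym 0 x) -lt0n.
by case: (0 < x); rewrite /= ?mul1n ?mul0n.
Qed.


Lemma good_pos p v : good p v -> (size v == size p) && (0 \notin v).
Proof.
case/andP => -> /allP H /=; apply/negP => H0.
have Hk : index 0 v < size v by rewrite index_mem.
have := H (index 0 v); rewrite mem_iota Hk => /(_ isT); rewrite /E nth_index //.
by case: (nth None p _) => [q|] //=; rewrite ltn0 andbF.
Qed.

Lemma good_pack p w : 0 \notin w -> good p (pack w) = good p w.
Proof.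
move=> Hw.
have Hs : size (pack w) = size w by rewrite size_map.
have H0 : forall j, (0 < nth 0 (pack w) j) = (0 < nth 0 w j).
  move=> j; case: (ltnP j (size w)) => Hj; last by rewrite !nth_default ?Hs.
  rewrite packE (nth_map 0) //=; apply/esym; rewrite lt0n; apply/eqP => E0.
  by have := mem_nth 0 Hj; rewrite E0 (negbTE Hw).
have Hlt : forall j k, j < size w -> k < size w ->
    (nth 0 (pack w) j < nth 0 (pack w) k) = (nth 0 w j < nth 0 w k).
  by move=> j k Hj Hk; rewrite packE !(nth_map 0) // ltnS idx_lt ?mem_nth.
rewrite /good Hs; congr (_ && _); apply: eq_in_all => k; rewrite mem_iota /= => Hk.
rewrite /E; case: (nth None p k) => [q|]; last exact: H0.
rewrite H0; case Hq: (0 < nth 0 w q.-1) => //=.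
have Hq1 : q.-1 < size w.
  by rewrite ltnNge; apply/negP => Hq'; rewrite nth_default in Hq.
exact: Hlt.
Qed.

Fixpoint words n m : seq (seq nat) :=
  if n is n'.+1 then [seq x :: w | x <- iota 1 m, w <- words n' m] else [:: [::]].

Lemma mem_words n m u : (u \in words n m) = (size u == n) && all (fun x => 0 < x <= m) u.
Proof.
elim: n u => [|n IH] [|x u] //=.
  by apply/negP => /allpairsP [[a b] [_ _]].
apply/allpairsP/idP.
  by move=> [[a b] /= [Ha Hb [-> ->]]]; move: Ha Hb; rewrite mem_iota add1n ltnS IH eqSS => -> /andP[-> ->].
rewrite eqSS => /and3P[Hs Hx Ha]; exists (x, u) => /=; split=> //.
  by rewrite mem_iota add1n ltnS.
by rewrite IH Hs.
Qed.

Lemma uniq_words n m : uniq (words n m).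
Proof.
elim: n => [|n IH] //=; apply: allpairs_uniq => //; first exact: iota_uniq.
by move=> [a b] [c d] _ _ /= [-> ->].
Qed.

Lemma sum_eq_andT (T : eqType) (s : seq T) c (b : bool) : uniq s ->
  \sum_(i <- s) ((c == i) && b) = (c \in s) && b.
Proof.
elim: s => [|a s IH]; first by rewrite big_nil.
rewrite big_cons /= inE => /andP[Ha Hs]; rewrite IH //.
case: (eqVneq c a) => [->|] /=; last by [].
by rewrite (negbTE Ha) andFb addn0.
Qed.

Theorem mainTheorem7 (F : pforest) :
  in_WQSym (piS (Sprime (iota_pf F))) /\
  forall s : seq (seq nat * nat),
    all packed (unzip1 s) ->
    piS (Sprime (iota_pf F)) =1 lin_comb s ->
    piS (Sprime (iota_pf [:: Bplus F])) =1 lin_comb (b_comb s).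
Proof.
set p := iota_pf F.
split.
  set U := [seq u <- words (size p) (size p) | packed u && good p u].
  exists [seq (u, 1) | u <- U]; split.
    apply/allP => u /mapP [[u' c] /mapP [u'' Hu'' [-> _]] ->] /=.
    by move: Hu''; rewrite mem_filter => /andP[/andP[]].
  move=> w; rewrite piS_Sprime /lin_comb big_map /=.
  rewrite (eq_bigr (fun u => nat_of_bool ((pack w == u) && (0 \notin w)))); last first.
    by move=> u _; rewrite mul1n /M andbC eq_sym.
  rewrite sum_eq_andT ?filter_uniq ?uniq_words // mem_filter mem_words packed_pack size_map /=.
  case H0: (0 \in w) => /=.
    rewrite andbF; case Hg: (good p w) => //; have := good_pos Hg; by rewrite H0 andbF.
  rewrite good_pack ?H0 //; case Hg: (good p w); rewrite ?andbF //=.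
  have /andP[/eqP Hs _] := good_pos Hg.
  rewrite -Hs eqxx /=; have := packed_bound (packed_pack w).
  by rewrite !packE size_map andbT => ->.
move=> s Hs Heq w.
rewrite iota_Bplus piS_Sprime; case: w => [|x v].
  rewrite good_nil /lin_comb /b_comb big_map big1 // => y _.
  by rewrite /M /= muln0.
rewrite (good_sh (iota_pf F)) /lin_comb /b_comb big_map /=.
rewrite (eq_big_seq (fun y => ((0 < x) && all (fun z => x < z) v) * (y.2 * M y.1 v))); last first.
  move=> y Hy /=; rewrite M_b; first by rewrite mulnCA.
  have Hp : packed y.1 by apply: (allP Hs); apply: map_f.
  apply/negP => H0; have := allP (packed_bound Hp) _ H0; by [].
rewrite -big_distrr /= -/(lin_comb s v) -Heq piS_Sprime.
by case: (good p v); case: (0 < x); case: all; rewrite /= ?muln0 ?muln1.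
Qed.
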